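(* For every permutation $\sigma$ and every Cayley permutation $y$, $$\mathrm{Flat}(\sigma)=\gamma\bigl(\mathrm{RGF}[\sigma^{-1}]\bigr)\qquad\text{and}\qquad\gamma\bigl(\mathrm{RGF}[y]\bigr)=\mathrm{Flat}\bigl(\gamma(y)\bigr).$$ In particular $|\mathrm{Flat}_n(\sigma)|=|\mathrm{RGF}_n[\sigma^{-1}]|$ for every $n$.
   Context: A Cayley permutation of length $n$ is a word of positive integers in which every integer from $1$ to its maximum occurs. Containment $y\le x$: there are indices $i_1<\dots<i_k$ ($k$ the length of $y$) with $x(i_s)<x(i_t)\iff y(s)<y(t)$ and $x(i_s)=x(i_t)\iff y(s)=y(t)$; otherwise $x$ avoids $y$. For $x$ of length $n$, $\gamma(x)$ is the permutation of $[n]$ obtained by sorting the pairs $(x(i),i)$ increasingly by first coordinate, ties by decreasing second coordinate, and reading off the second coordinates; $\gamma(E)=\{\gamma(x):x\in E\}$. $x\sim y$ iff $\gamma(x)=\gamma(y)$; $[y]$ is the class of $y$; for a set $E$ of Cayley permutations, $E[y]$ is the set of elements of $E$ avoiding every element of $[y]$. $\mathrm{RGF}_n$ (restricted growth functions) is the set of Cayley permutations $x$ of length $n$ with $x(1)=1$ (if $n\ge1$) and $x(i+1)\le\max\{x(1),\dots,x(i)\}+1$ for $1\le i<n$; $\mathrm{RGF}=\bigcup_n\mathrm{RGF}_n$. $\mathrm{Flat}$ is the set of permutations avoiding the vincular pattern $23\text{-}1$, i.e. permutations $\pi$ with no indices $i$ and $k>i+1$ such that $\pi(k)<\pi(i)<\pi(i+1)$;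 $\mathrm{Flat}_n(\sigma)$ is the set of elements of $\mathrm{Flat}$ of length $n$ avoiding $\sigma$. *)

(* Defs.v *)
From mathcomp Require Import all_boot.
From mathcomp Require Import boolp.

Set Implicit Arguments.
Unset Strict Implicit.
Unset Printing Implicit Defensive.

(* Words of positive integers are represented as [seq nat]; positions are
   0-based internally (position i of the seq is position i+1 of the paper). *)

Definition wmax (x : seq nat) : nat := foldr maxn 0 x.

Definition is_cayley (x : seq nat) : Prop :=
  (forall i, i < size x -> 0 < nth 0 x i) /\
  (forall k, 1 <= k <= wmax x -> k \in x).

Definition is_perm (s : seq nat) : Prop := is_cayley s /\ uniq s.

Definition perm_inv (s : seq nat) : seq nat :=
  [seq (index v s).+1 | v <- iota 1 (size s)].

Definition order_iso (z y : seq nat) : Prop :=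
  size z = size y /\
  forall s t, s < size y -> t < size y ->
    ((nth 0 z s < nth 0 z t) <-> (nth 0 y s < nth 0 y t)) /\
    ((nth 0 z s = nth 0 z t) <-> (nth 0 y s = nth 0 y t)).

Definition contains (x y : seq nat) : Prop :=
  exists m : bitseq, size m = size x /\ order_iso (mask m x) y.

Definition avoids (x y : seq nat) : Prop := ~ contains x y.

Definition gamma_rel (p q : nat * nat) : bool :=
  (p.1 < q.1) || ((p.1 == q.1) && (q.2 <= p.2)).

Definition gamma (x : seq nat) : seq nat :=
  [seq p.2 | p <- sort gamma_rel (zip x (iota 1 (size x)))].

Definition gamma_img (E : seq nat -> Prop) : seq nat -> Prop :=
  fun pi => exists x, E x /\ gamma x = pi.

Definition avoid_class (E : seq nat -> Prop) (y : seq nat) : seq nat -> Prop :=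
  fun x => E x /\ forall z, is_cayley z -> gamma z = gamma y -> avoids x z.

Definition is_rgf (x : seq nat) : Prop :=
  is_cayley x /\
  (0 < size x -> nth 0 x 0 = 1) /\
  (forall i, 1 <= i < size x -> nth 0 x i <= (wmax (take i x)).+1).

(* Flattened permutations: avoid the vincular pattern 23-1. *)
Definition is_flat (pi : seq nat) : Prop :=
  is_perm pi /\
  ~ (exists i k, i.+1 < k /\ k < size pi /\
        nth 0 pi k < nth 0 pi i /\ nth 0 pi i < nth 0 pi i.+1).

Definition Flat (sigma : seq nat) : seq nat -> Prop :=
  fun pi => is_flat pi /\ avoids pi sigma.

(* Number of words of length n in E, for E a set of Cayley permutations
   (whose elements of length n have all entries in 1..n, hence are
   faithfully encoded by n-tuples over 'I_(n+1)). *)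
Definition count_len (E : seq nat -> Prop) (n : nat) : nat :=
  #|[set t : n.-tuple 'I_n.+1 | `[< E [seq val i | i <- t] >] ]|.

(* Main.v *)
Require Import Defs.
From mathcomp Require Import all_boot.
From mathcomp Require Import zify boolp.

Set Implicit Arguments.
Unset Strict Implicit.
Unset Printing Implicit Defensive.

Lemma wmax_ub x v : v \in x -> v <= wmax x.
Proof.
elim: x => //= a x IH; rewrite in_cons => /orP [/eqP ->|/IH h].
  by rewrite leq_maxl.
by rewrite (leq_trans h) // leq_maxr.
Qed.

Lemma wmax_le x b : (forall v, v \in x -> v <= b) -> wmax x <= b.
Proof.
elim: x => //= a x IH h; rewrite geq_max h ?mem_head //.
by apply: IH => v hv; apply: h; rewrite in_cons hv orbT.
Qed.

Lemma wmax_mem x : 0 < size x -> wmax x \in x.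
Proof.
elim: x => // a x IH _.
have -> : wmax (a :: x) = maxn a (wmax x) by [].
rewrite in_cons.
case: x IH => [|b x] IH; first by rewrite maxn0 eqxx.
have := IH erefl; set w := wmax _ => hw.
case: (leqP a w) => h.
  by rewrite hw orbT.
by rewrite eqxx.
Qed.

Definition xv (x : seq nat) (p : nat) := nth 0 x p.-1.
Definition lex (x : seq nat) : rel nat :=
  fun p q => gamma_rel (xv x p, p) (xv x q, q).

Lemma zip_iota x m :
  zip x (iota m (size x)) = [seq (nth 0 x (p - m), p) | p <- iota m (size x)].
Proof.
elim: x m => //= a x IH m; rewrite subnn IH; congr (_ :: _).
apply/eq_in_map => p; rewrite mem_iota => /andP [h1 _].
by rewrite [p - m](_ : _ = (p - m.+1).+1) //; lia.
Qed.

Lemma gammaE x : gamma x = sort (lex x) (iota 1 (size x)).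
Proof.
rewrite /gamma zip_iota sort_map -map_comp /=.
rewrite [X in map X _](_ : _ = id); last by [].
rewrite map_id; congr sort.
apply/funext => p; apply/funext => q.
by rewrite /lex /xv /= !subn1.
Qed.

Lemma grel_total : total gamma_rel.
Proof. move=> [a p] [b q]; rewrite /gamma_rel /=; case: (ltngtP a b) => //= _; exact: leq_total. Qed.

Lemma grel_trans : transitive gamma_rel.
Proof.
move=> [b q] [a p] [c r]; rewrite /gamma_rel /=.
case/orP=> [h1|/andP[/eqP e1 h1]]; case/orP=> [h2|/andP[/eqP e2 h2]].
- by rewrite (ltn_trans h1 h2).
- by rewrite -e2 h1.
- by rewrite e1 h2.
- by rewrite e1 e2 eqxx (leq_trans h2 h1) orbT.
Qed.

Lemma grel_anti : antisymmetric gamma_rel.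
Proof.
move=> [a p] [b q]; rewrite /gamma_rel /=.
case: (ltngtP a b) => [h|h|->]; rewrite /=.
- by [].
- by [].
- by move=> h; rewrite (@anti_leq p q) // andbC.
Qed.

Lemma lex_total x : total (lex x).
Proof. move=> p q; exact: grel_total. Qed.
Lemma lex_trans x : transitive (lex x).
Proof. move=> q p r; exact: grel_trans. Qed.
Lemma lex_anti x : antisymmetric (lex x).
Proof. by move=> p q /grel_anti []. Qed.
Lemma lex_refl x : reflexive (lex x).
Proof. by move=> p; rewrite /lex /gamma_rel /= eqxx leqnn orbT. Qed.

Lemma gamma_perm x : perm_eq (gamma x) (iota 1 (size x)).
Proof. by rewrite gammaE perm_sort. Qed.
Lemma gamma_sorted x : sorted (lex x) (gamma x).
Proof. by rewrite gammaE; apply: sort_sorted; apply: lex_total. Qed.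
Lemma size_gamma x : size (gamma x) = size x.
Proof. by rewrite (perm_size (gamma_perm x)) size_iota. Qed.
Lemma uniq_gamma x : uniq (gamma x).
Proof. by rewrite (perm_uniq (gamma_perm x)) iota_uniq. Qed.
Lemma mem_gamma x p : (p \in gamma x) = (0 < p <= size x).
Proof. by rewrite (perm_mem (gamma_perm x)) mem_iota add1n ltnS. Qed.

Lemma sort_lex_uniq x s t : sorted (lex x) s -> perm_eq s t -> s = sort (lex x) t.
Proof.
move=> ss pst; apply: (sorted_eq (@lex_trans x) (@lex_anti x)) => //.
  by apply: sort_sorted; apply: lex_total.
by rewrite perm_sym perm_sort perm_sym.
Qed.

Lemma iota_cayley s n : perm_eq s (iota 1 n) -> is_cayley s.
Proof.
move=> ps; split.
  move=> i hi; have: nth 0 s i \in iota 1 n by rewrite -(perm_mem ps) mem_nth.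
  by rewrite mem_iota => /andP[].
move=> k /andP [k1 kw]; rewrite (perm_mem ps) mem_iota k1 /=.
have : wmax s <= n.
  by apply: wmax_le => v; rewrite (perm_mem ps) mem_iota; lia.
lia.
Qed.

Lemma iota_perm s n : perm_eq s (iota 1 n) -> is_perm s.
Proof. by move=> ps; split; [exact: iota_cayley ps| rewrite (perm_uniq ps) iota_uniq]. Qed.

Lemma cayley_pos x v : is_cayley x -> v \in x -> 0 < v.
Proof. by move=> [h _] vx; rewrite -(nth_index 0 vx) h // index_mem. Qed.

Lemma cayley_wmax x : is_cayley x -> wmax x <= size x.
Proof.
move=> cx; rewrite -[wmax x](size_iota 1); apply: uniq_leq_size; first exact: iota_uniq.
move=> k; rewrite mem_iota => hk; apply: cx.2; lia.
Qed.

Lemma perm_iotaP s : is_perm s -> perm_eq s (iota 1 (size s)).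
Proof.
move=> [cs us].
have e : s =i iota 1 (wmax s).
  move=> v; rewrite mem_iota; apply/idP/idP.
    move=> vs; have := cayley_pos cs vs; have := wmax_ub vs; lia.
  move=> hv; apply: cs.2; lia.
have p := uniq_perm us (iota_uniq _ _) e.
by rewrite (perm_size p) size_iota.
Qed.

Lemma oi_sym a b : order_iso a b -> order_iso b a.
Proof.
move=> [e h]; split; first by rewrite e.
move=> s t hs ht; rewrite e in hs ht.
by have [h1 h2] := h s t hs ht; split; split; [apply h1|apply h1|apply h2|apply h2].
Qed.

Lemma oi_trans a b c : order_iso a b -> order_iso b c -> order_iso a c.
Proof.
move=> [e1 h1] [e2 h2]; split; first by rewrite e1.
move=> s t hs ht; have hs' : s < size b by rewrite e2.
have ht' : t < size b by rewrite e2.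
have [h11 h12] := h1 s t hs' ht'; have [h21 h22] := h2 s t hs ht.
by split; [exact: iff_trans h11 h21|exact: iff_trans h12 h22].
Qed.

Lemma oi_map f s : {in s &, forall u v, (f u < f v) = (u < v)} ->
  order_iso (map f s) s.
Proof.
move=> hf; split; first by rewrite size_map.
move=> i j hi hj; rewrite !(nth_map 0) //.
have mi := mem_nth 0 hi; have mj := mem_nth 0 hj.
rewrite hf //; split=> //; split => [e|->] //.
case: (ltngtP (nth 0 s i) (nth 0 s j)) => // h.
  by move: h; rewrite -hf // e ltnn.
by move: h; rewrite -hf // e ltnn.
Qed.

Lemma count_lt_iota v k : count (fun u => u < v) (iota 1 k) = minn v.-1 k.
Proof.
elim: k => [|k IH]; first by rewrite minn0.
have -> : iota 1 k.+1 = iota 1 k ++ [:: k.+1].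
  by have := iotaD 1 k 1; rewrite addn1 add1n.
rewrite count_cat IH /= addn0.
case: (ltnP k.+1 v) => h /=; lia.
Qed.

Lemma count_nth (T : Type) (x0 : T) (a : pred T) s :
  count a s = count (fun i => a (nth x0 s i)) (iota 0 (size s)).
Proof. by rewrite -{1}(mkseq_nth x0 s) /mkseq count_map. Qed.

Lemma oi_perm_eq p q k : perm_eq p (iota 1 k) -> perm_eq q (iota 1 k) ->
  order_iso p q -> p = q.
Proof.
move=> pp pq [e h].
have sp : size p = k by rewrite (perm_size pp) size_iota.
apply: (eq_from_nth (x0 := 0)) => // s hs.
have hr : forall r, perm_eq r (iota 1 k) -> s < size r ->
    count (fun u => u < nth 0 r s) r = (nth 0 r s).-1.
  move=> r pr hsr; rewrite (permP pr) count_lt_iota.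
  have : nth 0 r s \in iota 1 k by rewrite -(perm_mem pr) mem_nth.
  rewrite mem_iota; lia.
have mp : nth 0 p s \in iota 1 k by rewrite -(perm_mem pp) mem_nth.
have mq : nth 0 q s \in iota 1 k by rewrite -(perm_mem pq) mem_nth -?e.
move: mp mq; rewrite !mem_iota => mp mq.
have := hr p pp hs; have := hr q pq ltac:(by rewrite -e).
rewrite (count_nth 0 _ p) (count_nth 0 _ q) -e.
rewrite (@eq_in_count _ (fun i => nth 0 p i < nth 0 p s) (fun i => nth 0 q i < nth 0 q s)); last first.
  move=> i; rewrite mem_iota add0n => /andP[_ hi].
  have hi' : i < size q by rewrite -e.
  have hs' : s < size q by rewrite -e.
  by have [[H1 H2] _] := h i s hi' hs'; apply/idP/idP => H; [apply: H1 | apply: H2].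
move=> H1 H2; rewrite H1 in H2; lia.
Qed.

Lemma gamma_oi a b : order_iso a b -> gamma a = gamma b.
Proof.
move=> [e h]; rewrite !gammaE e.
apply: sort_lex_uniq; last by rewrite perm_sort.
rewrite (@eq_in_sorted _ (mem (iota 1 (size b))) _ (lex a)).
- by apply: sort_sorted; apply: lex_total.
- move=> p q; rewrite !mem_iota => hp hq.
  have hp' : p.-1 < size b by lia.
  have hq' : q.-1 < size b by lia.
  have [h1 h2] := h _ _ hp' hq'.
  rewrite /lex /gamma_rel /xv /=.
  apply/orP/orP => [[H|/andP[/eqP H H']]|[H|/andP[/eqP H H']]].
  + by left; apply/h1.
  + by right; rewrite H'; apply/andP; split=> //; apply/eqP/h2.
  + by left; apply/h1.
  + by right; rewrite H'; apply/andP; split=> //; apply/eqP/h2.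
- by apply/allP => v; rewrite mem_sort.
Qed.

Definition rk (w : seq nat) (v : nat) := count (fun u => u <= v) (undup w).
Definition std (w : seq nat) := map (rk w) w.

Lemma rk_mono w u v : v \in w -> u < v -> rk w u < rk w v.
Proof.
move=> vw uv; rewrite /rk.
have : count (predU (fun t => t <= u) (pred1 v)) (undup w) <= count (fun t => t <= v) (undup w).
  by apply: sub_count => t /orP [h|/eqP ->]; [lia|].
rewrite -[count (predU _ _) _]addn0.
have -> : 0 = count (predI (fun t => t <= u) (pred1 v)) (undup w).
  by apply/esym/eqP; rewrite -leqn0 leqNgt -has_count; apply/hasP => [[t _ /andP [/= h /eqP e]]]; lia.
rewrite count_predUI count_uniq_mem ?undup_uniq // mem_undup vw; lia.
Qed.

Lemma rk_pos w v : v \in w -> 0 < rk w v.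
Proof.
move=> vw; rewrite /rk -has_count; apply/hasP; exists v => //; by rewrite mem_undup.
Qed.

Lemma rk_le w v : rk w v <= size (undup w).
Proof. exact: count_size. Qed.

Lemma std_oi w : order_iso w (std w).
Proof.
apply: oi_sym; apply: oi_map => u v uw vw.
case: (ltngtP u v) => [h|h|->]; first by rewrite rk_mono.
  by apply/negbTE; rewrite -leqNgt ltnW // rk_mono.
by rewrite ltnn.
Qed.

Lemma std_cayley w : is_cayley (std w).
Proof.
split.
  move=> i; rewrite size_map => hi; rewrite (nth_map 0) //; apply: rk_pos; exact: mem_nth.
move=> k /andP [k1 kw].
have hd : wmax (std w) <= size (undup w).
  by apply: wmax_le => v /mapP [u _ ->]; apply: rk_le.
have inj : {in undup w &, injective (rk w)}.
  move=> u v; rewrite !mem_undup => uw vw e.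
  case: (ltngtP u v) => // h; first by have := rk_mono vw h; rewrite e ltnn.
  by have := rk_mono uw h; rewrite e ltnn.
have U : uniq (map (rk w) (undup w)) by rewrite map_inj_in_uniq // undup_uniq.
have S : {subset map (rk w) (undup w) <= iota 1 (size (undup w))}.
  move=> r /mapP [u uw ->]; rewrite mem_undup in uw; rewrite mem_iota rk_pos //=.
  by rewrite add1n ltnS rk_le.
have [_ E] := uniq_min_size U S ltac:(by rewrite size_iota size_map).
have : k \in map (rk w) (undup w) by rewrite E mem_iota; lia.
by case/mapP => u; rewrite mem_undup => uw ->; apply: map_f.
Qed.

Lemma x_as_map x : map (xv x) (iota 1 (size x)) = x.
Proof.
apply: (eq_from_nth (x0 := 0)); rewrite size_map size_iota // => i hi.
by rewrite (nth_map 0) ?size_iota // nth_iota.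
Qed.

Lemma mask_xv x m : mask m x = map (xv x) (mask m (iota 1 (size x))).
Proof. by rewrite map_mask x_as_map. Qed.

Lemma core x m : size m = size x ->
  order_iso (sort (lex x) (mask m (iota 1 (size x)))) (gamma (mask m x)).
Proof.
move=> sm.
set P := mask m (iota 1 (size x)).
set w := mask m x.
have sP : sorted ltn P.
  by apply: (subseq_sorted ltn_trans (mask_subseq _ _)); apply: iota_ltn_sorted.
have uP : uniq P by apply: mask_uniq; apply: iota_uniq.
pose f p := (index p P).+1.
have fmono : {in P &, forall u v, (f u < f v) = (u < v)}.
  move=> u v uP' vP'; rewrite /f ltnS.
  case: (ltngtP (index u P) (index v P)) => h.
  - by apply/esym; apply: (sorted_ltn_index ltn_trans sP).
  - by apply/esym/negbTE; rewrite -leqNgt ltnW //; apply: (sorted_ltn_index ltn_trans sP).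
  - by have := congr1 (nth 0 P) h; rewrite !nth_index // => ->; rewrite ltnn.
have ew : w = map (xv x) P by rewrite /w mask_xv.
have sw : size w = size P by rewrite ew size_map.
have fP : map f P = iota 1 (size w).
  apply: (eq_from_nth (x0 := 0)); rewrite size_map ?size_iota // => i hi.
  rewrite (nth_map 0) // nth_iota ?sw // /f index_uniq //.
have xw : forall p, p \in P -> xv w (f p) = xv x p.
  by move=> p pP; rewrite /xv /f /= ew (nth_map 0) ?index_mem // nth_index.
apply: oi_trans (_ : order_iso _ (map f (sort (lex x) P))) _.
  apply: oi_sym; apply: oi_map => u v; rewrite !mem_sort; exact: fmono.
rewrite gammaE -fP sort_map.
have -> : sort (relpre f (lex w)) P = sort (lex x) P.
  apply: sort_lex_uniq; last by rewrite perm_sort.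
  rewrite (@eq_in_sorted _ (mem P) _ (relpre f (lex w))).
  - by apply: sort_sorted => p q; apply: lex_total.
  - move=> p q pP qP; rewrite /= /lex /gamma_rel /= !xw //.
    by rewrite [f q <= f p]leqNgt [q <= p]leqNgt fmono.
  - by apply/allP => v; rewrite mem_sort.
split; first by [].
by move=> s t _ _.
Qed.

Lemma sub_gamma x m : size m = size x -> exists m', size m' = size x /\
  mask m' (gamma x) = sort (lex x) (mask m (iota 1 (size x))).
Proof.
move=> sm; set P := mask m (iota 1 (size x)).
have eP : P = filter (mem P) (iota 1 (size x)).
  by apply/subseq_uniqP; [apply: iota_uniq | apply: mask_subseq].
exists (map (mem P) (gamma x)); split; first by rewrite size_map size_gamma.
by rewrite -filter_mask {2}eP -filter_sort ?gammaE //; [apply: lex_total | apply: lex_trans].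
Qed.

Lemma B_fwd x z : contains x z -> contains (gamma x) (gamma z).
Proof.
move=> [m [sm oi]]; have [m' [sm' e]] := sub_gamma sm.
exists m'; split; first by rewrite size_gamma.
by rewrite e -(gamma_oi oi); apply: core.
Qed.

Lemma B_rev x y : contains (gamma x) (gamma y) ->
  exists z, is_cayley z /\ gamma z = gamma y /\ contains x z.
Proof.
move=> [m' [sm' oi]].
set t := mask m' (gamma x) in oi.
have et : t = filter (mem t) (gamma x).
  by apply/subseq_uniqP; [apply: uniq_gamma | apply: mask_subseq].
set m := map (mem t) (iota 1 (size x)).
have sm : size m = size x by rewrite size_map size_iota.
have et2 : t = sort (lex x) (mask m (iota 1 (size x))).
  rewrite {1}et gammaE filter_sort; [|apply: lex_total|apply: lex_trans].
  by rewrite filter_mask.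
have c := core sm; rewrite -et2 in c.
have o2 := oi_trans (oi_sym c) oi.
have ez : gamma (mask m x) = gamma y.
  have [e _] := o2; rewrite !size_gamma in e.
  apply: (oi_perm_eq (gamma_perm _) _ o2); rewrite e; exact: gamma_perm.
exists (std (mask m x)); split; first exact: std_cayley.
split; first by rewrite -(gamma_oi (std_oi _)).
by exists m; split=> //; apply: std_oi.
Qed.

Section GammaFacts.
Variable x : seq nat.
Local Notation n := (size x).
Local Notation pi := (gamma x).
Local Notation P j := (nth 0 (gamma x) j).

Lemma gam_lex j k : j <= k -> k < n -> lex x (P j) (P k).
Proof.
move=> jk kn; apply: (sorted_leq_nth (@lex_trans x) (@lex_refl x) 0 (gamma_sorted x)) => //;
  rewrite inE size_gamma //; exact: leq_ltn_trans jk kn.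
Qed.

Lemma gam_le j k : j <= k -> k < n -> xv x (P j) <= xv x (P k).
Proof. by move=> jk kn; have := gam_lex jk kn; rewrite /lex /gamma_rel /= => /orP [/ltnW|/andP[/eqP -> _]]. Qed.

Lemma gam_eq j k : j < k -> k < n -> xv x (P j) = xv x (P k) -> P k < P j.
Proof.
move=> jk kn e; have := gam_lex (ltnW jk) kn; rewrite /lex /gamma_rel /= e ltnn eqxx /=.
rewrite leq_eqVlt => /orP [/eqP E|//].
have jn : j < n by exact: ltn_trans jk kn.
move: E => /eqP; rewrite nth_uniq ?size_gamma ?uniq_gamma // => /eqP E; by move: jk; rewrite E ltnn.
Qed.

Lemma gam_range j : j < n -> 0 < P j <= n.
Proof. by move=> jn; rewrite -mem_gamma mem_nth // size_gamma. Qed.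

Lemma gam_occ p : 0 < p <= n -> exists2 t, t < n & P t = p.
Proof.
move=> hp; have pg : p \in pi by rewrite mem_gamma.
by exists (index p pi); [rewrite -(size_gamma x) index_mem | rewrite nth_index].
Qed.

Lemma xv_mem p : 0 < p <= n -> xv x p \in x.
Proof. by case: p => // p hp; rewrite /xv /= mem_nth. Qed.

Lemma gam_uniq_lt j k : j < n -> k < n -> P j = P k -> j = k.
Proof. by move=> jn kn /eqP; rewrite nth_uniq ?size_gamma ?uniq_gamma // => /eqP. Qed.

Hypothesis cx : is_cayley x.

Lemma gam_pos j : j < n -> 0 < xv x (P j).
Proof. by move=> jn; apply: (cayley_pos cx); apply: xv_mem; apply: gam_range. Qed.

Lemma gam_nojump j : j.+1 < n -> xv x (P j.+1) <= (xv x (P j)).+1.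
Proof.
move=> jn; rewrite leqNgt; apply/negP => h.
have [c ec] : {c | c = (xv x (P j)).+1} by eexists.
rewrite -ec in h.
have cw : 1 <= c <= wmax x.
  apply/andP; split; first by rewrite ec.
  apply: leq_trans (ltnW h) _; apply: wmax_ub.
  by apply: xv_mem; apply: gam_range.
have := cx.2 c cw => cin.
have [t tn et] : exists2 t, t < n & xv x (P t) = c.
  have [p pn ep] : exists2 p, 0 < p <= n & xv x p = c.
    exists (index c x).+1; first by rewrite -index_mem in cin.
    by rewrite /xv succnK nth_index.
  have [t tn Pt] := gam_occ pn; exists t => //; by rewrite Pt.
case: (leqP t j) => tj.
  by have := gam_le tj (ltnW jn); rewrite et ec ltnn.
by have := gam_le tj tn; rewrite et; move: h; lia.
Qed.

Lemma gam_first : 0 < n -> xv x (P 0) = 1.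
Proof.
move=> n0.
have w1 : 1 <= wmax x.
  exact: leq_trans (cx.1 0 n0) (wmax_ub (mem_nth 0 n0)).
have := cx.2 1 ltac:(by rewrite w1) => m1.
have [p pn ep] : exists2 p, 0 < p <= n & xv x p = 1.
  exists (index 1 x).+1; first by rewrite -index_mem in m1.
  by rewrite /xv succnK nth_index.
have [t tn Pt] := gam_occ pn.
have := gam_le (leq0n t) tn; rewrite Pt ep; have := gam_pos n0; lia.
Qed.

Hypothesis rx : is_rgf x.

Lemma rgf_below q : 0 < q <= n -> forall a, 0 < a <= xv x q ->
  exists2 q', 0 < q' <= q & xv x q' = a.
Proof.
elim/ltn_ind: q => q IH hq a ha.
case: (eqVneq a (xv x q)) => [->|ne]; first by exists q => //; rewrite leqnn andbT; case/andP: hq.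
have n0 : 0 < n by case/andP: hq => h1 h2; exact: leq_trans h1 h2.
have q2 : 1 < q.
  case: (leqP q 1) => // q1; have q1' : q = 1 by lia.
  by move: ha ne; rewrite q1' /xv /= (rx.2.1 n0); lia.
case: q IH hq ha ne q2 => // q IH hq ha ne q2.
rewrite /xv succnK in ha ne.
have hi : 1 <= q < n by lia.
have hw := rx.2.2 q hi.
have tn : 0 < size (take q x) by rewrite size_takel; lia.
have wm := wmax_mem tn.
have [W eW] : {W | W = wmax (take q x)} by eexists.
rewrite -eW in hw wm.
have ti : index W (take q x) < q by rewrite -[X in _ < X](size_takel (n0:=q) (s:=x)) ?index_mem //; lia.
have ei : nth 0 x (index W (take q x)) = W by rewrite -(nth_take 0 ti) nth_index.
have := IH (index W (take q x)).+1 ltac:(lia) ltac:(lia) a.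
rewrite /xv succnK ei => /(_ ltac:(lia)) [q' h1 h2].
by exists q' => //; lia.
Qed.

Lemma rgf_asc j : j.+1 < n -> xv x (P j) < xv x (P j.+1) -> P j < P j.+1.
Proof.
move=> jn h.
have jn' : j < n by lia.
have hq := gam_range jn.
have [q' hq' eq'] := rgf_below hq (a := xv x (P j)) ltac:(rewrite gam_pos //; lia).
have [t tn Pt] := gam_occ (p := q') ltac:(lia).
case: (ltngtP t j) => tj.
- have := gam_eq tj jn'; rewrite Pt eq' => /(_ erefl) H.
  have : q' != P j.+1 by apply/eqP => E; move: h; rewrite -E eq' ltnn.
  lia.
- by have := gam_le tj tn; rewrite Pt eq'; lia.
- have : q' != P j.+1 by apply/eqP => E; move: h; rewrite -E eq' ltnn.
  by move=> ne; subst t; rewrite Pt; lia.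
Qed.

End GammaFacts.

Definition asc (pi : seq nat) j := count (fun i => nth 0 pi i < nth 0 pi i.+1) (iota 0 j).

Lemma ascS pi j : asc pi j.+1 = asc pi j + (nth 0 pi j < nth 0 pi j.+1).
Proof.
rewrite /asc.
have -> : iota 0 j.+1 = iota 0 j ++ [:: j] by have := iotaD 0 j 1; rewrite addn1 add0n.
by rewrite count_cat /= addn0.
Qed.

Lemma asc0 pi : asc pi 0 = 0.
Proof. by []. Qed.

Lemma asc_mono pi j k : j <= k -> asc pi j <= asc pi k.
Proof.
elim: k => [|k IH]; first by rewrite leqn0 => /eqP ->.
rewrite leq_eqVlt => /orP [/eqP ->//|]; rewrite ltnS => /IH h.
by rewrite ascS; exact: leq_trans h (leq_addr _ _).
Qed.

Lemma asc_ivt pi j v : v <= asc pi j -> exists2 j', j' <= j & asc pi j' = v.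
Proof.
elim: j v => [|j IH] v; first by rewrite asc0 leqn0 => /eqP ->; exists 0.
case: (leqP v (asc pi j)) => h1 h2.
  by have [j' h3 h4] := IH v h1; exists j' => //; exact: leq_trans h3 (leqnSn _).
exists j.+1 => //; move: h2 h1; rewrite ascS; case: (_ < _) => /=; lia.
Qed.

Definition D (pi : seq nat) := map (fun p => (asc pi (index p pi)).+1) (iota 1 (size pi)).

Lemma size_D pi : size (D pi) = size pi.
Proof. by rewrite size_map size_iota. Qed.

Lemma rgf_gamma x : is_rgf x -> forall j, j < size x ->
  xv x (nth 0 (gamma x) j) = (asc (gamma x) j).+1.
Proof.
move=> rx; have cx := rx.1.
elim=> [|j IH] jn; first by rewrite gam_first.
have IH' := IH (ltnW jn).
have h1 := gam_le (leqnSn j) jn.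
have h2 := gam_nojump cx jn.
rewrite ascS.
case: (ltngtP (xv x (nth 0 (gamma x) j)) (xv x (nth 0 (gamma x) j.+1))) => h3.
- by rewrite (rgf_asc cx rx jn h3) addn1; lia.
- lia.
- have h4 := gam_eq (ltnSn j) jn h3.
  by rewrite ltnNge (ltnW h4) /= addn0 -h3.
Qed.

Lemma D_gamma x : is_rgf x -> D (gamma x) = x.
Proof.
move=> rx; apply: (eq_from_nth (x0 := 0)); rewrite size_D size_gamma // => i hi.
rewrite (nth_map 0) ?size_iota ?size_gamma // nth_iota ?size_gamma // add1n.
have ig : i.+1 \in gamma x by rewrite mem_gamma.
have jn : index i.+1 (gamma x) < size x by rewrite -(size_gamma x) index_mem.
have := rgf_gamma rx jn; rewrite nth_index // => <-.
Qed.

Lemma gamma_inj_rgf x x' : is_rgf x -> is_rgf x' -> gamma x = gamma x' -> x = x'.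
Proof. by move=> rx rx' e; rewrite -(D_gamma rx) -(D_gamma rx') e. Qed.

Lemma rgf_flat x : is_rgf x -> is_flat (gamma x).
Proof.
move=> rx; have cx := rx.1; split; first exact: (iota_perm (gamma_perm x)).
move=> [i [k [h1 [h2 [h3 h4]]]]]; rewrite size_gamma in h2.
have in1 : i.+1 < size x by lia.
have ia : xv x (nth 0 (gamma x) i.+1) = (xv x (nth 0 (gamma x) i)).+1.
  by rewrite (rgf_gamma rx in1) (rgf_gamma rx (ltnW in1)) ascS h4 addn1.
have hk := gam_le (ltnW h1) h2.
have [q' hq' eq'] := rgf_below rx (gam_range h2) (a := xv x (nth 0 (gamma x) i))
  ltac:(rewrite gam_pos //=; [lia|lia]).
have [t tn Pt] := gam_occ (x := x) (p := q') ltac:(have := gam_range h2; lia).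
case: (ltngtP t i) => ti.
- have := gam_eq ti (ltn_trans (ltnSn i) in1); rewrite Pt eq' => /(_ erefl); lia.
- by have := gam_le ti tn; rewrite Pt eq' ia ltnn.
- by subst t; lia.
Qed.

Section FlatD.
Variable pi : seq nat.
Hypothesis fl : is_flat pi.
Local Notation n := (size pi).
Local Notation P j := (nth 0 pi j).

Lemma fl_perm : perm_eq pi (iota 1 n).
Proof. exact: perm_iotaP fl.1. Qed.

Lemma fl_uniq : uniq pi.
Proof. exact: fl.1.2. Qed.

Lemma fl_range j : j < n -> 0 < P j <= n.
Proof.
move=> jn; have : P j \in iota 1 n by rewrite -(perm_mem fl_perm) mem_nth.
by rewrite mem_iota add1n ltnS.
Qed.

Lemma D_at j : j < n -> xv (D pi) (P j) = (asc pi j).+1.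
Proof.
move=> jn; have hr := fl_range jn.
rewrite /xv /D (nth_map 0) ?size_iota; last by lia.
rewrite nth_iota; last by lia.
rewrite add1n prednK; last by lia.
by rewrite index_uniq // fl_uniq.
Qed.

Lemma fl_inv j : j < n -> asc pi j = 0 \/
  exists i, [/\ i < j, (asc pi i).+1 = asc pi j, P i < P i.+1 & P i < P j].
Proof.
elim: j => [|j IH] jn; first by left.
have IH' := IH (ltnW jn).
case: (boolP (P j < P j.+1)) => a.
  by right; exists j; rewrite ascS a addn1.
rewrite ascS (negbTE a) addn0.
case: IH' => [->|[i [h1 h2 h3 h4]]]; first by left.
right; exists i; split => //; first by lia.
have nf := fl.2.
case: (ltngtP (P i) (P j.+1)) => h.
- by [].
- by exfalso; apply: nf; exists i, j.+1; split; [lia|split; [done|split]].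
- have i_n : i < n by lia.
  move/eqP: h; rewrite nth_uniq ?fl_uniq // => /eqP E; lia.
Qed.

Lemma D_rgf : is_rgf (D pi).
Proof.
have sD := size_D pi.
have posD : forall i, i < n -> nth 0 (D pi) i = (asc pi (index i.+1 pi)).+1.
  by move=> i hi; rewrite /D (nth_map 0) ?size_iota // nth_iota // add1n.
have posP : forall i, i < n -> exists2 j, j < n & P j = i.+1.
  move=> i hi; have m : i.+1 \in pi by rewrite (perm_mem fl_perm) mem_iota; lia.
  by exists (index i.+1 pi); [rewrite index_mem | rewrite nth_index].
have cay : is_cayley (D pi).
  split.
    by move=> i; rewrite sD => hi; rewrite posD.
  move=> k /andP [k1 kw].
  have n0 : 0 < size (D pi) by case: (D pi) kw => //=; rewrite leqNgt k1.
  have := wmax_mem n0; move=> /(nthP 0) [i hi ei].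
  rewrite sD in hi; have [j jn Pj] := posP i hi.
  have := D_at jn; rewrite Pj /xv /= ei => ew.
  have [j' hj' aj'] := @asc_ivt pi j k.-1 ltac:(lia).
  have j'n : j' < n by lia.
  have := D_at j'n; rewrite aj' prednK // => <-.
  apply: xv_mem; rewrite sD; exact: fl_range j'n.
split=> //; split.
  move=> n0; rewrite sD in n0; have [j jn Pj] := posP 0 n0.
  have := D_at jn; rewrite Pj /xv /= => ->.
  case: (fl_inv jn) => [->//|[i [h1 h2 h3 h4]]].
  by move: h4; rewrite Pj; have := fl_range (ltn_trans h1 jn); lia.
move=> i /andP [i1 hi]; rewrite sD in hi.
have [j jn Pj] := posP i hi.
have := D_at jn; rewrite Pj /xv /= => ->.
case: (fl_inv jn) => [->//|[i' [h1 h2 h3 h4]]].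
have i'n : i' < n by lia.
have := D_at i'n; rewrite h2 /xv => e.
have r := fl_range i'n.
have mt : nth 0 (D pi) (P i').-1 \in take i (D pi).
  rewrite -(nth_take 0 (n0 := i)); last by rewrite Pj in h4; lia.
  by apply: mem_nth; rewrite size_takel ?sD; lia.
have := wmax_ub mt; rewrite e; lia.
Qed.

Lemma D_gammaK : gamma (D pi) = pi.
Proof.
rewrite gammaE size_D; apply/esym/sort_lex_uniq; last exact: fl_perm.
apply/(sortedP 0) => j jn.
have jn' : j < n by lia.
rewrite /lex /gamma_rel /= (D_at jn') (D_at jn) ascS.
case: (boolP (P j < P j.+1)) => a /=; first by rewrite addn1 ltnSn.
by rewrite addn0 ltnn eqxx /= leqNgt.
Qed.

End FlatD.

Lemma part2 y pi : gamma_img (avoid_class is_rgf y) pi <-> Flat (gamma y) pi.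
Proof.
split.
  move=> [x [[rx av] <-]]; split; first exact: rgf_flat.
  move=> c; have [z [cz [ez cxz]]] := B_rev c.
  exact: (av z cz ez cxz).
move=> [fl av]; exists (D pi); split; last exact: D_gammaK.
split; first exact: D_rgf.
move=> z cz ez c; apply: av; have := B_fwd c.
by rewrite D_gammaK // ez.
Qed.

Lemma gamma_perm_inv s : is_perm s -> gamma (perm_inv s) = s.
Proof.
move=> ps; have pp := perm_iotaP ps; have us := ps.2.
set n := size s in pp.
have sr : size (perm_inv s) = n by rewrite /perm_inv size_map size_iota.
have val : forall j, j < n -> xv (perm_inv s) (nth 0 s j) = j.+1.
  move=> j jn; have : nth 0 s j \in iota 1 n by rewrite -(perm_mem pp) mem_nth.
  rewrite mem_iota => hr.
  rewrite /xv /perm_inv (nth_map 0) ?size_iota; last by lia.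
  rewrite nth_iota; last by lia.
  by rewrite add1n prednK ?index_uniq //; lia.
rewrite gammaE sr; apply/esym/sort_lex_uniq => //.
apply/(sortedP 0) => j jn.
by rewrite /lex /gamma_rel /= !val //; lia.
Qed.

Lemma perm_inv_cayley s : is_perm s -> is_cayley (perm_inv s).
Proof.
move=> ps; have pp := perm_iotaP ps; have us := ps.2.
apply: (iota_cayley (n := size s)).
apply: uniq_perm.
- rewrite /perm_inv map_inj_in_uniq ?iota_uniq // => u v; rewrite -!(perm_mem pp) => hu hv [].
  by move=> /(congr1 (fun i => nth 0 s i)); rewrite !nth_index.
- exact: iota_uniq.
- move=> r; apply/idP/idP.
    case/mapP => v; rewrite -(perm_mem pp) => vs ->.
    by rewrite mem_iota add1n ltnS /= ltnS index_mem.
  rewrite mem_iota add1n ltnS => /andP [r1 r2].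
  have rs : r.-1 < size s by rewrite prednK.
  apply/mapP; exists (nth 0 s r.-1).
    by rewrite -(perm_mem pp) mem_nth.
  by rewrite index_uniq // prednK.
Qed.

Lemma part1 sigma pi : is_perm sigma ->
  (Flat sigma pi <-> gamma_img (avoid_class is_rgf (perm_inv sigma)) pi).
Proof.
move=> ps; rewrite part2 gamma_perm_inv //.
Qed.

Definition tup n (t0 : n.-tuple 'I_n.+1) (s : seq nat) : n.-tuple 'I_n.+1 :=
  insubd t0 [seq inord i | i <- s].

Lemma tupK n (t0 : n.-tuple 'I_n.+1) s : size s = n -> (forall v, v \in s -> v <= n) ->
  [seq val i | i <- tup t0 s] = s.
Proof.
move=> ss hs; rewrite /tup insubdK; last by rewrite -topredE /= size_map ss.
rewrite -map_comp; apply: map_id_in => v vs /=; rewrite inordK //; exact: hs.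
Qed.

Lemma part3 sigma n : is_perm sigma ->
  count_len (Flat sigma) n = count_len (avoid_class is_rgf (perm_inv sigma)) n.
Proof.
move=> ps; rewrite /count_len.
set A := [set t : n.-tuple 'I_n.+1 | `[< avoid_class is_rgf (perm_inv sigma) [seq val i | i <- t] >]].
pose F (t : n.-tuple 'I_n.+1) := tup t (gamma [seq val i | i <- t]).
have Fv : forall t, [seq val i | i <- F t] = gamma [seq val i | i <- t].
  move=> t; apply: tupK; first by rewrite size_gamma size_map size_tuple.
  by move=> v; rewrite mem_gamma size_map size_tuple => /andP[].
have -> : [set t : n.-tuple 'I_n.+1 | `[< Flat sigma [seq val i | i <- t] >]] = F @: A.
  apply/setP => t; rewrite inE; apply/asboolP/imsetP.
  - move=> fb; have [x [ax ex]] := (part1 _ ps).1 fb.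
    have sx : size x = n by rewrite -(size_gamma x) ex size_map size_tuple.
    have hx : forall v, v \in x -> v <= n.
      by move=> v vx; rewrite -sx; apply: leq_trans (wmax_ub vx) (cayley_wmax ax.1.1).
    exists (tup t x).
      by rewrite inE; apply/asboolP; rewrite tupK.
    apply: val_inj; apply: (inj_map val_inj).
    by rewrite Fv tupK.
  - move=> [s sa ->]; rewrite inE in sa; move/asboolP in sa.
    rewrite Fv; apply: (part1 _ ps).2.
    by exists [seq val i | i <- s].
rewrite card_in_imset // => t1 t2; rewrite !inE => /asboolP a1 /asboolP a2 e.
have := congr1 (fun t : n.-tuple 'I_n.+1 => [seq val i | i <- t]) e; rewrite /= !Fv => e'.
have := gamma_inj_rgf a1.1 a2.1 e' => e2.
by apply: val_inj; apply: (inj_map val_inj).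
Qed.

Theorem theorem6p4 :
  (forall sigma : seq nat, is_perm sigma ->
     (forall pi, Flat sigma pi <-> gamma_img (avoid_class is_rgf (perm_inv sigma)) pi)) /\
  (forall y : seq nat, is_cayley y ->
     (forall pi, gamma_img (avoid_class is_rgf y) pi <-> Flat (gamma y) pi)) /\
  (forall (sigma : seq nat) (n : nat), is_perm sigma ->
     count_len (Flat sigma) n = count_len (avoid_class is_rgf (perm_inv sigma)) n).
Proof.
split; first by move=> sigma ps pi; exact: part1.
split; first by move=> y _ pi; exact: part2.
by move=> sigma n ps; exact: part3.
Qed.
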